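(* Let $\mathcal{X}$ be a feature set, $\mathcal{Y}^*$ a convex subset of a Euclidean space, $\mathcal{F}$ the set of all maps $\mathcal{X}\to\mathcal{Y}^*$, and $\mathcal{F}^T\subseteq\mathcal{F}$ an allowable function class. Let $f^*\in\mathcal{F}$ be the true function and $\widehat f^*\in\mathcal{F}$ an estimate of it. Let $\ell:\mathcal{Y}^*\times\mathcal{Y}^*\to\mathbb{R}_+$ be differentiable with gradients bounded in norm by some $K<\infty$ and convex in its second argument. Fix $n\ge1$ and suppose: (i) (approximate minimization) for every $x_{1:n}=(x_1,\dots,x_n)\in\mathcal{X}^n$ there is a returned $\widetilde f^T(\cdot;x_{1:n})\in\mathcal{F}^T$ with $n^{-1}\sum_{i=1}^n\ell(\widetilde f^T(x_i;x_{1:n}),\widehat f^*(x_i))\le\min_{f\in\mathcal{F}^T}n^{-1}\sum_{i=1}^n\ell(f(x_i),\widehat f^*(x_i))+\delta$ for some $\delta\ge0$; (ii) (approximate maximization) the returned $\widetilde x_{1:n}\in\mathcal{X}^n$ satisfies $n^{-1}\sum_{i=1}^n\ell(\widetilde f^T(\widetilde x_i;\widetilde x_{1:n}),\widehat f^*(\widetilde x_i))\ge\max_{x_{1:n}}n^{-1}\sum_{i=1}^n\ell(\widetilde f^T(x_i;x_{1:n}),\widehat f^*(x_i))-\nu$ for some $\nu\ge0$. Define $\widehat{\mathcal{E}}:=n^{-1}\sum_{i=1}^n\ell(\widetilde f^T(\widetilde x_i;\widetilde x_{1:n}),\widehat f^*(\widetilde x_i))$ and $\mathcal{E}:=\max_{x_{1:n}\in\mathcal{X}^n}\min_{f\in\mathcal{F}^T}n^{-1}\sum_{i=1}^n\ell(f(x_i),f^*(x_i))$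 (all maxima and minima assumed attained). Then $$|\widehat{\mathcal{E}}-\mathcal{E}|\le(\delta+\nu)+3K\,\|\widehat f^*-f^*\|_\infty,$$ where $\|f_1-f_2\|_\infty=\sup_{x\in\mathcal{X}}|f_1(x)-f_2(x)|$.
   Context: The quantity $\mathcal{E}$ is the population value of the falsifier's max-min program and $\widehat{\mathcal{E}}$ is the value attained by the plug-in program in which $f^*$ is replaced by the estimate $\widehat f^*$ and the inner minimization and outer maximization are carried out by approximate routines with optimality gaps $\delta$ and $\nu$. *)

(* Defs.v *)
From HB Require Import structures.
From mathcomp Require Import all_boot all_order all_algebra.
From mathcomp Require Import all_classical all_reals all_analysis.
Set Implicit Arguments. Unset Strict Implicit. Unset Printing Implicit Defensive.
Import Order.TTheory GRing.Theory Num.Theory.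
Import numFieldNormedType.Exports.
Local Open Scope classical_set_scope.
Local Open Scope ring_scope.

Definition eucnorm {R : realType} {d : nat} (v : 'rV[R]_d) : R :=
  Num.sqrt (\sum_(i < d) v ord0 i ^+ 2).

Definition convex_subset {R : realType} {d : nat} (Y : set 'rV[R]_d) : Prop :=
  forall a b, Y a -> Y b -> forall t : R, 0 <= t <= 1 ->
    Y (t *: a + (1 - t) *: b).

Definition joint_loss {R : realType} {d : nat} (l : 'rV[R]_d -> 'rV[R]_d -> R)
  (z : 'rV[R]_(d + d)) : R := l (lsubmx z) (rsubmx z).

Definition loss_grad {R : realType} {d : nat} (l : 'rV[R]_d -> 'rV[R]_d -> R)
  (a b : 'rV[R]_d) : 'rV[R]_(d + d) :=
  \row_(j < d + d) ('D_(delta_mx ord0 j) (joint_loss l) (row_mx a b)).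

Definition emp_risk {R : realType} {d n : nat} {X : Type}
  (l : 'rV[R]_d -> 'rV[R]_d -> R) (f g : X -> 'rV[R]_d) (xs : 'I_n -> X) : R :=
  n%:R^-1 * \sum_(i < n) l (f (xs i)) (g (xs i)).

Definition is_min {R : realType} (S : set R) (v : R) : Prop :=
  S v /\ forall w, S w -> v <= w.
Definition is_max {R : realType} (S : set R) (v : R) : Prop :=
  S v /\ forall w, S w -> w <= v.

Definition sup_dist {R : realType} {d : nat} {X : Type} (f1 f2 : X -> 'rV[R]_d) : \bar R :=
  ereal_sup [set (eucnorm (f1 x - f2 x))%:E | x in [set: X]].

(* Main.v *)
Require Import Defs.
From HB Require Import structures.
From mathcomp Require Import all_boot all_order all_algebra.
From mathcomp Require Import all_classical all_reals all_analysis.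
From mathcomp Require Import ring lra.
Import Order.TTheory GRing.Theory Num.Theory.
Import numFieldNormedType.Exports.
Local Open Scope classical_set_scope.
Local Open Scope ring_scope.
Lemma eucnorm_ge0 (R : realType) m (u : 'rV[R]_m) : 0 <= eucnorm u.
Proof. exact: sqrtr_ge0. Qed.

Lemma sumsq_ge0 (R : realType) m (u : 'rV[R]_m) : 0 <= \sum_(j < m) u ord0 j ^+ 2.
Proof. by apply: sumr_ge0 => j _; exact: sqr_ge0. Qed.

Lemma eucnorm_sq (R : realType) m (u : 'rV[R]_m) :
  eucnorm u ^+ 2 = \sum_(j < m) u ord0 j ^+ 2.
Proof. by rewrite /eucnorm sqr_sqrtr // sumsq_ge0. Qed.

Lemma eucnorm0_entries (R : realType) m (u : 'rV[R]_m) :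
  eucnorm u = 0 -> forall j, u ord0 j = 0.
Proof.
move=> h j; have h2 : \sum_(j < m) u ord0 j ^+ 2 = 0 by rewrite -eucnorm_sq h expr0n.
have := @psumr_eq0P _ _ predT (fun j => u ord0 j ^+ 2) (fun j _ => sqr_ge0 _) h2 j isT.
by move/eqP; rewrite sqrf_eq0 => /eqP.
Qed.

Lemma cs_lower (R : realType) m (u v : 'rV[R]_m) :
  - (eucnorm u * eucnorm v) <= \sum_(j < m) u ord0 j * v ord0 j.
Proof.
set A := eucnorm u; set B := eucnorm v.
have [A0|] := eqVneq A 0.
  rewrite A0 mul0r oppr0 big1 // => j _; by rewrite eucnorm0_entries // mul0r.
have [B0|] := eqVneq B 0.
  rewrite B0 mulr0 oppr0 big1 // => j _; by rewrite (@eucnorm0_entries _ _ v B0) mulr0.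
move=> Bn0 An0.
have Ap : 0 < A by rewrite lt_def An0 eucnorm_ge0.
have Bp : 0 < B by rewrite lt_def Bn0 eucnorm_ge0.
set s := \sum_(j < m) u ord0 j * v ord0 j.
have H : 0 <= \sum_(j < m) (B * u ord0 j + A * v ord0 j) ^+ 2.
  by apply: sumr_ge0 => j _; exact: sqr_ge0.
have E : \sum_(j < m) (B * u ord0 j + A * v ord0 j) ^+ 2 =
   B ^+ 2 * (\sum_(j < m) u ord0 j ^+ 2) + 2 * A * B * s + A ^+ 2 * (\sum_(j < m) v ord0 j ^+ 2).
  rewrite /s !mulr_sumr -!big_split /=.
  by apply: eq_bigr => j _; ring.
rewrite -!eucnorm_sq -/A -/B in E.
rewrite E in H.
have AB : 0 < A * B by exact: mulr_gt0.
have : 0 <= (A * B) * (2 * (A * B + s)) by nra.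
rewrite pmulr_rge0 // => H2; nra.
Qed.

Lemma eucnorm_row0 (R : realType) d (v : 'rV[R]_d) :
  eucnorm (row_mx (0 : 'rV[R]_d) v) = eucnorm v.
Proof.
rewrite /eucnorm big_split_ord /= big1 ?add0r; last first.
  by move=> j _; rewrite row_mxEl mxE expr0n.
by apply: congr1; apply: eq_bigr => j _; rewrite row_mxEr.
Qed.

Lemma dir_lower (R : realType) d (l : 'rV[R]_d -> 'rV[R]_d -> R) (K : R) (a b : 'rV[R]_d)
  (w : 'rV[R]_(d + d)) :
  differentiable (joint_loss l) (row_mx a b) ->
  eucnorm (loss_grad l a b) <= K ->
  - (K * eucnorm w) <= 'D_w (joint_loss l) (row_mx a b).
Proof.
move=> df hK.
rewrite deriveE // {2}(row_sum_delta w) linear_sum /=.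
have -> : \sum_(j < d + d) 'd (joint_loss l) (row_mx a b) (w ord0 j *: 'e_j)
   = \sum_(j < d + d) w ord0 j * loss_grad l a b ord0 j.
  apply: eq_bigr => j _; rewrite linearZ /= /loss_grad mxE -deriveE //.
have h1 := @cs_lower _ _ w (loss_grad l a b).
have h2 := @eucnorm_ge0 _ _ w.
nra.
Qed.

Lemma lip (R : realType) d (Ystar : set 'rV[R]_d) (l : 'rV[R]_d -> 'rV[R]_d -> R) (K : R)
  (a b b' : 'rV[R]_d) :
  differentiable (joint_loss l) (row_mx a b) ->
  eucnorm (loss_grad l a b) <= K ->
  (forall t : R, 0 <= t <= 1 ->
     l a (t *: b' + (1 - t) *: b) <= t * l a b' + (1 - t) * l a b) ->
  l a b - l a b' <= K * eucnorm (b' - b).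
Proof.
move=> df hK cvx.
set f := joint_loss l; set p := row_mx a b; set w := row_mx (0 : 'rV[R]_d) (b' - b).
have key : forall h : R, f (h *: w + p) = l a (h *: b' + (1 - h) *: b).
  move=> h; rewrite /f /joint_loss /p /w scale_row_mx add_row_mx row_mxKl row_mxKr.
  rewrite scaler0 add0r; congr (l a _).
  by rewrite scalerBr scalerBl scale1r addrA addrAC.
have D := @dir_lower _ _ l K a b w df hK.
have cv : (fun h : R => h^-1 *: ((f \o shift p) (h *: w) - f p)) @ 0^' --> 'D_w f p.
  exact: diff_derivable.
have cvr := cvg_dnbhs_at_right cv.
have le1 : 'D_w f p <= l a b' - l a b.
  apply: (cvgr_to_le cvr).
  near=> h.
  have h0 : 0 < h by near: h; exact: nbhs_right_gt.
  have h1 : h < 1 by near: h; exact: nbhs_right_lt.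
  rewrite /= key.
  have := cvx h; rewrite (ltW h0) (ltW h1) => /(_ isT) H.
  have -> : forall x y : R, x *: y = x * y by [].
  have fp : f p = l a b by rewrite /f /joint_loss /p row_mxKl row_mxKr.
  rewrite ler_pdivrMl // fp; nra.
have ew : eucnorm w = eucnorm (b' - b) by exact: eucnorm_row0.
by rewrite ew in D; lra.
Unshelve. all: by end_near.
Qed.

Lemma eucnormN (R : realType) m (u : 'rV[R]_m) : eucnorm (- u) = eucnorm u.
Proof. by rewrite /eucnorm; congr Num.sqrt; apply: eq_bigr => j _; rewrite mxE sqrrN. Qed.

Lemma emp_risk_diff (R : realType) d n (X : Type) (l : 'rV[R]_d -> 'rV[R]_d -> R)
   (f g1 g2 : X -> 'rV[R]_d) (xs : 'I_n -> X) (C : R) :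
  (1 <= n)%N ->
  (forall i, `| l (f (xs i)) (g1 (xs i)) - l (f (xs i)) (g2 (xs i)) | <= C) ->
  `| emp_risk l f g1 xs - emp_risk l f g2 xs | <= C.
Proof.
move=> n1 hb; rewrite /emp_risk -mulrBr -sumrB normrM.
have np : 0 < n%:R :> R by rewrite ltr0n.
rewrite ger0_norm; last by rewrite invr_ge0 ltW.
rewrite ler_pdivrMl //.
apply: le_trans (ler_norm_sum _ _ _) _.
apply: (@le_trans _ _ (\sum_(i < n) C)); first by apply: ler_sum => i _; exact: hb.
by rewrite sumr_const card_ord mulr_natl.
Qed.

Lemma main_real (R : realType) (d : nat) (X : Type)
  (FT : set (X -> 'rV[R]_d)) (fstar fhat : X -> 'rV[R]_d)
  (l : 'rV[R]_d -> 'rV[R]_d -> R) (n : nat) (delta nu : R)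
  (ftilde : ('I_n -> X) -> (X -> 'rV[R]_d)) (xtilde : 'I_n -> X)
  (mhat : ('I_n -> X) -> R) (M : R) (mstar : ('I_n -> X) -> R) (E C : R) :
  (forall f (xs : 'I_n -> X), FT f -> `| emp_risk l f fhat xs - emp_risk l f fstar xs | <= C) ->
  (forall xs, is_min [set emp_risk l f fhat xs | f in FT] (mhat xs)) ->
  (forall xs, FT (ftilde xs)) ->
  (forall xs, emp_risk l (ftilde xs) fhat xs <= mhat xs + delta) ->
  is_max [set emp_risk l (ftilde xs) fhat xs | xs in [set: 'I_n -> X]] M ->
  M - nu <= emp_risk l (ftilde xtilde) fhat xtilde ->
  (forall xs, is_min [set emp_risk l f fstar xs | f in FT] (mstar xs)) ->
  is_max (range mstar) E ->
  0 <= delta -> 0 <= nu ->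
  `| emp_risk l (ftilde xtilde) fhat xtilde - E | <= delta + nu + C.
Proof.
move=> hb hmh hFT happ [[xs1 _ hM] hMmax] hnu hms [[xs0 _ hE] hEmax] hd hn.
have hs1 : forall xs, mhat xs <= mstar xs + C.
  move=> xs; have [[f Hf <-] _] := hms xs.
  have := (hmh xs).2 (emp_risk l f fhat xs) (ex_intro2 _ _ f Hf erefl).
  have := hb f xs Hf; rewrite ler_norml => /andP[_ h1] h2; lra.
have hs2 : forall xs, mstar xs <= mhat xs + C.
  move=> xs; have [[f Hf <-] _] := hmh xs.
  have := (hms xs).2 (emp_risk l f fstar xs) (ex_intro2 _ _ f Hf erefl).
  have := hb f xs Hf; rewrite ler_norml => /andP[h1 _] h2; lra.
have a1 : E - C <= M.
  have := hMmax (emp_risk l (ftilde xs0) fhat xs0) (ex_intro2 _ _ xs0 I erefl).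
  have := (hmh xs0).2 _ (ex_intro2 _ _ (ftilde xs0) (hFT xs0) erefl).
  have := hs2 xs0; rewrite hE; lra.
have a2 : M <= E + C + delta.
  rewrite -hM; have := happ xs1; have := hs1 xs1.
  have := hEmax (mstar xs1) (ex_intro2 _ _ xs1 I erefl); lra.
have a3 := hMmax _ (ex_intro2 _ _ xtilde I erefl).
rewrite ler_norml; apply/andP; split; lra.
Qed.

Theorem proposition1 (R : realType) (d : nat) (X : Type)
  (Ystar : set 'rV[R]_d) (FT : set (X -> 'rV[R]_d))
  (fstar fhat : X -> 'rV[R]_d)
  (l : 'rV[R]_d -> 'rV[R]_d -> R) (K : R) (n : nat)
  (delta nu : R)
  (ftilde : ('I_n -> X) -> (X -> 'rV[R]_d)) (xtilde : 'I_n -> X)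
  (mhat : ('I_n -> X) -> R) (M : R)
  (mstar : ('I_n -> X) -> R) (E : R) :
  convex_subset Ystar ->
  (* F^T is a subset of F = maps X -> Y* *)
  (forall f, FT f -> forall x, Ystar (f x)) ->
  (forall x, Ystar (fstar x)) ->
  (forall x, Ystar (fhat x)) ->
  (* loss: nonnegative, differentiable, gradients bounded by K, convex in 2nd arg *)
  (forall a b, Ystar a -> Ystar b -> 0 <= l a b) ->
  (forall a b, Ystar a -> Ystar b -> differentiable (joint_loss l) (row_mx a b)) ->
  (forall a b, Ystar a -> Ystar b -> eucnorm (loss_grad l a b) <= K) ->
  (forall a b b', Ystar a -> Ystar b -> Ystar b' -> forall t : R, 0 <= t <= 1 ->
     l a (t *: b + (1 - t) *: b') <= t * l a b + (1 - t) * l a b') ->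
  (1 <= n)%N ->
  (* (i) approximate minimization, the minimum mhat xs being attained *)
  0 <= delta ->
  (forall xs, is_min [set emp_risk l f fhat xs | f in FT] (mhat xs)) ->
  (forall xs, FT (ftilde xs)) ->
  (forall xs, emp_risk l (ftilde xs) fhat xs <= mhat xs + delta) ->
  (* (ii) approximate maximization, the maximum M being attained *)
  0 <= nu ->
  is_max [set emp_risk l (ftilde xs) fhat xs | xs in [set: 'I_n -> X]] M ->
  M - nu <= emp_risk l (ftilde xtilde) fhat xtilde ->
  (* population max-min value E (attained) *)
  (forall xs, is_min [set emp_risk l f fstar xs | f in FT] (mstar xs)) ->
  is_max (range mstar) E ->
  ((`| emp_risk l (ftilde xtilde) fhat xtilde - E |)%:E
     <= (delta + nu)%:E + (3 * K)%:E * sup_dist fhat fstar)%E.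
Proof.
move=> cvxY hFTY hfs hfh hl0 hdiff hgrad hcvx n1 hd hmh hFT happ hn hM hnu hms hE.
pose x0 := xtilde (Ordinal n1).
have K0 : 0 <= K := le_trans (@eucnorm_ge0 _ _ _) (hgrad _ _ (hfs x0) (hfs x0)).
have lipY : forall a b b', Ystar a -> Ystar b -> Ystar b' ->
    `| l a b - l a b' | <= K * eucnorm (b - b').
  move=> a b b' Ya Yb Yb'; rewrite ler_norml; apply/andP; split.
    have := @lip _ _ Ystar l K a b' b (hdiff _ _ Ya Yb') (hgrad _ _ Ya Yb')
      (fun t ht => hcvx a b b' Ya Yb Yb' t ht); lra.
  have := @lip _ _ Ystar l K a b b' (hdiff _ _ Ya Yb) (hgrad _ _ Ya Yb)
      (fun t ht => hcvx a b' b Ya Yb' Yb t ht).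
  by move=> h; rewrite -[b' - b]opprB eucnormN in h; lra.
have gen : forall C, (forall x, K * eucnorm (fhat x - fstar x) <= C) ->
    `| emp_risk l (ftilde xtilde) fhat xtilde - E | <= delta + nu + C.
  move=> C hC; apply: (@main_real _ _ _ _ _ _ _ _ _ _ _ _ _ _ _ _ C _ hmh hFT happ hM hnu hms hE hd hn).
  move=> f xs Hf; apply: emp_risk_diff => // i.
  exact: le_trans (lipY _ _ _ (hFTY f Hf _) (hfh _) (hfs _)) (hC _).
have ub : forall x, ((eucnorm (fhat x - fstar x))%:E <= sup_dist fhat fstar)%E.
  move=> x; apply: ereal_sup_ubound; by exists x.
case: (sup_dist fhat fstar) ub (ub x0) => [r| |] ub' hr.
- have ubr : forall x, eucnorm (fhat x - fstar x) <= r.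
    by move=> x; have := ub' x; rewrite lee_fin.
  have r0 : 0 <= r := le_trans (@eucnorm_ge0 _ _ _) (ubr x0).
  have := gen (K * r) (fun x => ler_wpM2l K0 (ubr x)).
  rewrite -EFinM -EFinD lee_fin => h; nra.
- have [K00|Kp] := eqVneq K 0.
    rewrite K00 mulr0 mul0e adde0 lee_fin.
    have hz : forall x, K * eucnorm (fhat x - fstar x) <= 0 by move=> x; rewrite K00 mul0r.
    by have := gen 0 hz; rewrite addr0.
  have K3 : 0 < 3 * K by rewrite mulr_gt0 // lt_def Kp K0.
  by rewrite mulry gtr0_sg // mul1e addey // leey.
- by move: hr; rewrite leeNy_eq.
Qed.
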